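(* Let $A$ be an $n\times n$ matrix with a blocking of $n_t$ blocks and largest block size $n_b$, and let $A=LR$ be the block LU factorization produced by the block LU algorithm in which every diagonal block $L_{kk}$ is unitary. (a) If $A$ is nonsingular and diagonally dominant by columns (i.e. $|a_{jj}|\ge\sum_{i\ne j}|a_{ij}|$ for all $j$), then $\|L\|_2\le(n_b^{3/2}+1)n_t$. (b) If $A$ is symmetric positive definite, then $\|L\|_2\le(\kappa_2(A)^{1/2}+1)n_t$.
   Context: Blocking: a strictly increasing list $[1=\mathcal{I}_1<\dots<\mathcal{I}_{n_t+1}=n+1]$ defining blocks $A_{i,j}$ (rows $\mathcal{I}_i:\mathcal{I}_{i+1}-1$, columns $\mathcal{I}_j:\mathcal{I}_{j+1}-1$). Block LU algorithm: $A^{(1)}=A$; for $k=1,\dots,n_t$, factor $A^{(k)}_{kk}=L_{kk}R_{kk}$, set $L_{k+1:n_t,k}=A^{(k)}_{k+1:n_t,k}R_{kk}^{-1}$, $R_{k,k+1:n_t}=L_{kk}^{-1}A^{(k)}_{k,k+1:n_t}$, $A^{(k+1)}=A^{(k)}_{k+1:n_t,k+1:n_t}-L_{k+1:n_t,k}R_{k,k+1:n_t}$. $\|\cdot\|_2$ is the spectral norm and $\kappa_2(A)=\|A\|_2\|A^{-1}\|_2$. *)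

(* Defs.v *)
From HB Require Import structures.
From mathcomp Require Import all_boot all_order all_algebra.
From mathcomp Require Import complex.
From mathcomp Require Import boolp classical_sets reals.
Set Implicit Arguments. Unset Strict Implicit. Unset Printing Implicit Defensive.
Import Order.TTheory GRing.Theory Num.Theory.
Local Open Scope ring_scope.
Local Open Scope classical_set_scope.

Definition vnorm2 (R : realType) (n : nat) (x : 'cV[R[i]]_n) : R :=
  Num.sqrt (\sum_(i < n) (@complex.Re R (x i 0) ^+ 2 + @complex.Im R (x i 0) ^+ 2)).

Definition specnorm (R : realType) (m n : nat) (A : 'M[R[i]]_(m, n)) : R :=
  sup [set vnorm2 (A *m x) | x in [set x : 'cV[R[i]]_n | vnorm2 x = 1]].

Definition kappa2 (R : realType) (n : nat) (A : 'M[R[i]]_n) : R :=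
  specnorm A * specnorm (invmx A).

Definition ctrmx (R : realType) (m n : nat) (A : 'M[R[i]]_(m, n)) : 'M[R[i]]_(n, m) :=
  (map_mx (@conjc R) A)^T.

(* Blocking, 0-based: I 0 = 0 < I 1 < ... < I nt = n; block k (0 <= k < nt)
   consists of the indices i with I k <= i < I (k+1).
   (Paper: 1 = I_1 < ... < I_{nt+1} = n+1, block k = I_k .. I_{k+1}-1.) *)
Definition is_blocking (n nt : nat) (I : nat -> nat) : Prop :=
  I 0%N = 0%N /\ I nt = n /\ (forall k, (k < nt)%N -> (I k < I k.+1)%N).

Definition inblk (I : nat -> nat) (k : nat) (n : nat) (i : 'I_n) : bool :=
  (I k <= i < I k.+1)%N.

Definition max_blksize (nt : nat) (I : nat -> nat) : nat :=
  \max_(k < nt) (I k.+1 - I k)%N.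

(* The block LU algorithm (with unitary diagonal blocks L_kk), as a relation
   between the input A, the outputs L, R and the sequence of intermediate
   matrices S k = A^{(k+1)} (stored as full n x n matrices, only the trailing
   part rows/cols >= I k being meaningful).  For k = 0 .. nt-1:
   - A^{(k)}_kk = L_kk R_kk with L_kk unitary;
   - R_kk invertible (inverse M), L_{k+1:nt,k} = A^{(k)}_{k+1:nt,k} R_kk^{-1};
   - R_{k,k+1:nt} = L_kk^{-1} A^{(k)}_{k,k+1:nt}  (L_kk^{-1} is the conjugate transpose of L_kk);
   - A^{(k+1)} = A^{(k)}_{k+1:nt,k+1:nt} - L_{k+1:nt,k} R_{k,k+1:nt};
   - L is block lower triangular and R block upper triangular. *)
Definition block_LU (R : realType) (n nt : nat) (I : nat -> nat)
    (A L U : 'M[R[i]]_n) (S : nat -> 'M[R[i]]_n) : Prop :=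
  S 0%N = A /\
  forall k, (k < nt)%N ->
    (forall i j : 'I_n, inblk I k i -> inblk I k j ->
       S k i j = \sum_(l < n | inblk I k l) L i l * U l j) /\
    (forall i j : 'I_n, inblk I k i -> inblk I k j ->
       \sum_(l < n | inblk I k l) conjc (L l i) * L l j = (i == j)%:R) /\
    (forall i j : 'I_n, inblk I k i -> inblk I k j ->
       \sum_(l < n | inblk I k l) L i l * conjc (L j l) = (i == j)%:R) /\
    (exists M : 'M[R[i]]_n,
       (forall i j : 'I_n, inblk I k i -> inblk I k j ->
          \sum_(l < n | inblk I k l) U i l * M l j = (i == j)%:R) /\
       (forall i j : 'I_n, inblk I k i -> inblk I k j ->
          \sum_(l < n | inblk I k l) M i l * U l j = (i == j)%:R) /\
       (forall i j : 'I_n, (I k.+1 <= i)%N -> inblk I k j ->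
          L i j = \sum_(l < n | inblk I k l) S k i l * M l j)) /\
    (forall i j : 'I_n, inblk I k i -> (I k.+1 <= j)%N ->
       U i j = \sum_(l < n | inblk I k l) conjc (L l i) * S k l j) /\
    (forall i j : 'I_n, (I k.+1 <= i)%N -> (I k.+1 <= j)%N ->
       S k.+1 i j = S k i j - \sum_(l < n | inblk I k l) L i l * U l j) /\
    (forall i j : 'I_n, inblk I k j -> (i < I k)%N -> L i j = 0) /\
    (forall i j : 'I_n, inblk I k i -> (j < I k)%N -> U i j = 0).

Definition col_diag_dominant (R : realType) (n : nat) (A : 'M[R[i]]_n) : Prop :=
  forall j : 'I_n, \sum_(i < n | i != j) `|A i j| <= `|A j j|.

Definition spd (R : realType) (n : nat) (A : 'M[R[i]]_n) : Prop :=
  A^T = A /\ forall x : 'cV[R[i]]_n, x != 0 -> 0 < (ctrmx x *m A *m x) 0 0.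

Arguments block_LU {R n} nt I A L U S.

(* Main.v *)
Require Import Defs.
From HB Require Import structures.
From mathcomp Require Import all_boot all_order all_algebra.
From mathcomp Require Import complex.
From mathcomp Require Import boolp classical_sets reals.
From mathcomp Require Import ring lra.
Set Implicit Arguments. Unset Strict Implicit. Unset Printing Implicit Defensive.
Import Order.TTheory GRing.Theory Num.Theory.
Local Open Scope ring_scope.
Section DD.
Variable F : numFieldType.
Variable T : finType.

Lemma dd_lemma (m : nat) : forall (S : T -> T -> F) (P Q : {set T}),
  #|P| = m ->
  (forall j, j \in P -> \sum_(i in P | i != j) `|S i j| + \sum_(i in Q) `|S i j| <= `|S j j|) ->
  (forall u : T -> F, (forall i, i \in P -> \sum_(j in P) S i j * u j = 0) ->
      forall j, j \in P -> u j = 0) ->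
  forall u : T -> F, \sum_(i in Q) `|\sum_(j in P) S i j * u j|
                      <= \sum_(i in P) `|\sum_(j in P) S i j * u j|.
Proof.
elim: m => [|m IH] S P Q cardP dom inj u.
  have -> : P = finset.set0 by apply/eqP; rewrite -cards_eq0 cardP.
  rewrite big1 ?sumr_ge0 // => i _; by rewrite big_set0 normr0.
have [p Pp] : exists p, p \in P.
  by apply/set0Pn; rewrite -card_gt0 cardP.
set d := S p p.
have dn0 : d != 0.
  apply/negP => /eqP d0.
  pose u0 := fun j : T => if j == p then (1 : F) else 0.
  have : u0 p = 0.
    apply: (inj u0) => // i Pi.
    rewrite (bigD1 p) //= /u0 eqxx mulr1 big1 ?addr0; last first.
      by move=> j /andP[_ /negbTE ->]; rewrite mulr0.
    case: (eqVneq i p) => [->|nip]; first exact: d0.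
    have := dom p Pp; rewrite -/d d0 normr0.
    rewrite (bigD1 i) /=; last by rewrite Pi nip.
    move=> H; apply/eqP; rewrite -normr_eq0 eq_le normr_ge0 andbT.
    apply: le_trans H; rewrite -addrA lerDl addr_ge0 ?sumr_ge0 //.
  by rewrite /u0 eqxx => /eqP; rewrite oner_eq0.
pose P' := P :\ p.
have inP' i : (i \in P') = (i != p) && (i \in P) by rewrite in_setD1.
have sumP (G : T -> F) : \sum_(i in P) G i = G p + \sum_(i in P') G i.
  by rewrite (bigD1 p) //=; congr (_ + _); apply: eq_bigl => i; rewrite inP' andbC.
pose S' := fun i j => S i j - S i p * S p j / d.
have cardP' : #|P'| = m by move: cardP; rewrite (cardsD1 p) Pp add1n => -[].
have dom' : forall j, j \in P' -> \sum_(i in P' | i != j) `|S' i j| + \sum_(i in Q) `|S' i j| <= `|S' j j|.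
  move=> j; rewrite inP' => /andP[njp Pj].
  have domp := dom p Pp; have domj := dom j Pj.
  set A := \sum_(i in P' | i != j) `|S i j| + \sum_(i in Q) `|S i j|.
  set B := \sum_(i in P' | i != j) `|S i p| + \sum_(i in Q) `|S i p|.
  have eP (G : T -> F) k : k \in P' ->
     \sum_(i in P | i != k) G i = G p + \sum_(i in P' | i != k) G i.
    move=> Pk; rewrite (bigD1 p) /=; last by rewrite Pp eq_sym; move: Pk; rewrite inP' => /andP[].
    congr (_ + _); apply: eq_bigl => i; rewrite inP'; by case: (i \in P); case: (i != p); case: (_ != _).
  have eP2 (G : T -> F) : \sum_(i in P | i != p) G i = G j + \sum_(i in P' | i != j) G i.
    rewrite (bigD1 j) /=; last by rewrite Pj.
    congr (_ + _); apply: eq_bigl => i; rewrite inP'; by case: (i \in P); case: (i != p); case: (_ != _).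
  have hB : B <= `|d| - `|S j p|.
    by rewrite lerBrDl addrA -eP2.
  have hA : `|S p j| + A <= `|S j j|.
    by rewrite addrA -eP // inP' njp Pj.
  have nd : 0 < `|d| by rewrite normr_gt0.
  have e1 : forall i, `|S' i j| <= `|S i j| + `|S i p| * (`|S p j| / `|d|).
    move=> i; rewrite /S' mulrA -normrM -normfV -normrM.
    by apply: le_trans (ler_normB _ _) _.
  apply: (@le_trans _ _ (A + B * (`|S p j| / `|d|))).
    rewrite /A /B mulrDl !big_distrl /= addrACA -!big_split /=.
    by apply: lerD; apply: ler_sum => i _; apply: e1.
  apply: (@le_trans _ _ (`|S j j| - `|S j p * S p j / d|)); last first.
    by rewrite /S'; apply: lerB_dist.
  apply: (@le_trans _ _ (A + (`|d| - `|S j p|) * (`|S p j| / `|d|))).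
    rewrite lerD2l ler_wpM2r ?divr_ge0 //.
  rewrite mulrBl mulrCA divff ?normr_eq0 // mulr1.
  rewrite !normrM normfV mulrA.
  by rewrite addrA lerD2r addrC.
have inj' : forall u : T -> F, (forall i, i \in P' -> \sum_(j in P') S' i j * u j = 0) ->
      forall j, j \in P' -> u j = 0.
  move=> u' Hu' j Pj.
  pose X := \sum_(l in P') S p l * u' l.
  pose u1 := fun l => if l == p then - X / d else u' l.
  have E : forall i, \sum_(l in P) S i l * u1 l = S i p * (- X / d) + \sum_(l in P') S i l * u' l.
    move=> i; rewrite sumP /u1 eqxx; congr (_ + _); apply: eq_bigr => l.
    by rewrite inP' => /andP[/negbTE -> _].
  have := inj u1 _ j; rewrite /u1; move: (Pj); rewrite inP' => /andP[/negbTE -> Pj'].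
  apply => // i Pi; rewrite E.
  case: (eqVneq i p) => [->|nip].
    by rewrite -/d -/X mulrC divfK // addNr.
  transitivity (\sum_(j in P') S' i j * u' j); last by apply: Hu'; rewrite inP' nip Pi.
  rewrite /S' /X; under [in RHS]eq_bigr do rewrite mulrBl.
  rewrite sumrB addrC; congr (_ + _).
  rewrite mulNr mulrN mulr_suml mulr_sumr; congr (- _); apply: eq_bigr => l _.
  ring.
have IH' := IH S' P' Q cardP' dom' inj' u.
set w' := fun i => \sum_(j in P') S' i j * u j.
set t := (\sum_(j in P) S p j * u j) / d.
have Ew : forall i, \sum_(j in P) S i j * u j = S i p * t + w' i.
  move=> i; rewrite /w' /S' /t sumP.
  under [X in _ = _ + X]eq_bigr do rewrite mulrBl.
  rewrite sumrB sumP.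
  have -> : \sum_(j in P') S i p * S p j / d * u j = S i p / d * \sum_(j in P') S p j * u j.
    by rewrite mulr_sumr; apply: eq_bigr => l _; ring.
  rewrite -/d; field.
  done.
under eq_bigr do rewrite Ew.
under [in X in _ <= X]eq_bigr do rewrite Ew.
rewrite sumP.
have -> : S p p * t + w' p = \sum_(j in P) S p j * u j by rewrite -Ew.
have Et : \sum_(j in P) S p j * u j = d * t by rewrite /t mulrC divfK.
rewrite Et.
apply: (@le_trans _ _ (`|t| * \sum_(i in Q) `|S i p| + \sum_(i in Q) `|w' i|)).
  rewrite mulr_sumr -big_split /=; apply: ler_sum => i _.
  by apply: le_trans (ler_normD _ _) _; rewrite normrM mulrC.
apply: (@le_trans _ _ (`|t| * (`|d| - \sum_(i in P') `|S i p|) + \sum_(i in P') `|w' i|)).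
  apply: lerD => //; apply: ler_wpM2l => //.
  rewrite lerBrDl; have := dom p Pp.
  have -> : \sum_(i in P | i != p) `|S i p| = \sum_(i in P') `|S i p|.
    by apply: eq_bigl => i; rewrite inP' andbC.
  done.
rewrite (normrM d t) mulrBr (mulrC `|t| `|d|) -addrA lerD2l.
rewrite mulr_sumr -sumrN -big_split; apply: ler_sum => i _ /=.
rewrite addrC lerBlDr.
have := ler_normB (S i p * t + w' i) (S i p * t).
by rewrite addrAC subrr add0r (normrM (S i p)) (mulrC `|S i p|).
Qed.
End DD.
Section X.
Variable R : realType.
Local Notation C := (R[i]).
Lemma sum_deltar (T : finType) (p : pred T) (F : T -> C) l :
  p l -> \sum_(r | p r) F r * (r == l)%:R = F l.
Proof.
move=> pl; rewrite (bigD1 l) //= eqxx mulr1 big1 ?addr0 // => r /andP[_ /negbTE ->].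
by rewrite mulr0.
Qed.
Lemma sum_deltal (T : finType) (p : pred T) (F : T -> C) l :
  p l -> \sum_(r | p r) (l == r)%:R * F r = F l.
Proof.
move=> pl; rewrite (bigD1 l) //= eqxx mul1r big1 ?addr0 // => r /andP[_].
by rewrite eq_sym => /negbTE ->; rewrite mul0r.
Qed.
End X.
Section Y.
Variable R : realType.
Local Notation C := (R[i]).
Lemma sum_assoc (T : finType) (p q : pred T) (a : T -> C) (b : T -> T -> C) (c : T -> C) :
  \sum_(i | p i) a i * (\sum_(j | q j) b i j * c j)
  = \sum_(j | q j) (\sum_(i | p i) a i * b i j) * c j.
Proof.
under eq_bigr do rewrite big_distrr /=.
rewrite exchange_big /=; apply: eq_bigr => j _; rewrite big_distrl /=.
by apply: eq_bigr => i _; rewrite mulrA.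
Qed.
End Y.
Section Stage.
Variable R : realType.
Local Notation C := (R[i]).
Variables (n nt : nat) (I : nat -> nat) (A L U : 'M[C]_n) (S : nat -> 'M[C]_n).
Hypothesis HB : is_blocking n nt I.
Hypothesis HLU : block_LU nt I A L U S.

Local Notation inb k := (@inblk I k n).

Lemma stage_LS k : (k < nt)%N -> exists M : 'M[C]_n,
  (forall i l : 'I_n, (I k <= i)%N -> inb k l -> L i l = \sum_(m | inb k m) S k i m * M m l).
Proof.
move=> hk; have [_ /(_ k hk) [Hf [Hu1 [Hu2 [[M [HUM [HMU HLM]]] _]]]]] := HLU.
exists M => i l hi hl.
case: (leqP (I k.+1) i) => hi2; first exact: HLM.
have ik : inb k i by rewrite /inblk hi hi2.
transitivity (\sum_(m | inb k m) (\sum_(r | inb k r) L i r * U r m) * M m l).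
  2: by apply: eq_bigr => m hm; rewrite Hf.
rewrite -sum_assoc.
rewrite -(sum_deltar (p := fun r => inb k r) (fun r => L i r) hl).
by apply: eq_bigr => r hr; rewrite HUM.
Qed.

Lemma stage_inj k : (k < nt)%N -> forall v : 'I_n -> C,
  (forall i : 'I_n, inb k i -> \sum_(m | inb k m) S k i m * v m = 0) ->
  forall l : 'I_n, inb k l -> v l = 0.
Proof.
move=> hk v Hv l hl.
have [_ /(_ k hk) [Hf [Hu1 [Hu2 [[M [HUM [HMU HLM]]] _]]]]] := HLU.
have HUv : forall q : 'I_n, inb k q -> \sum_(m | inb k m) U q m * v m = 0.
  move=> q hq.
  transitivity (\sum_(i | inb k i) (L i q)^*%C * \sum_(m | inb k m) S k i m * v m).
    2: by rewrite big1 // => i hi; rewrite Hv // mulr0.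
  transitivity (\sum_(i | inb k i) (L i q)^*%C * \sum_(m | inb k m) (\sum_(r | inb k r) L i r * U r m) * v m).
    2: by apply: eq_bigr => i hi; congr (_ * _); apply: eq_bigr => m hm; rewrite Hf.
  under [RHS]eq_bigr do rewrite -sum_assoc.
  rewrite sum_assoc.
  rewrite -(sum_deltal (p := fun r => inb k r) (fun r => \sum_(m | inb k m) U r m * v m) hq).
  by apply: eq_bigr => r hr; rewrite (Hu1 q r hq hr).
rewrite -(sum_deltal (p := fun r => inb k r) v hl).
transitivity (\sum_(q | inb k q) M l q * \sum_(m | inb k m) U q m * v m).
  2: by rewrite big1 // => q hq; rewrite HUv // mulr0.
rewrite sum_assoc; apply: eq_bigr => q hq; by rewrite HMU.
Qed.

Lemma stage_SU k : (k < nt)%N -> forall i j : 'I_n, inb k i -> (I k.+1 <= j)%N ->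
  S k i j = \sum_(l | inb k l) L i l * U l j.
Proof.
move=> hk i j hi hj.
have [_ /(_ k hk) [Hf [Hu1 [Hu2 [_ [HU _]]]]]] := HLU.
under eq_bigr => l hl do rewrite (HU l j hl hj).
rewrite sum_assoc.
rewrite -(sum_deltal (p := fun r => inb k r) (fun r => S k r j) hi).
by apply: eq_bigr => r hr; rewrite -(Hu2 i r hi hr).
Qed.

End Stage.
Section PartA.
Variable R : realType.
Local Notation C := (R[i]).
Variables (n nt : nat) (I : nat -> nat) (A L U : 'M[C]_n) (S : nat -> 'M[C]_n).
Hypothesis HB : is_blocking n nt I.
Hypothesis HLU : block_LU nt I A L U S.

Local Notation inb k := (@inblk I k n).

Lemma I_mono k : (k < nt)%N -> (I k <= I k.+1)%N.
Proof. by move=> hk; case: HB => _ [_ /(_ k hk) /ltnW]. Qed.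

Lemma split_trail k (G : 'I_n -> C) (e : pred 'I_n) : (k < nt)%N ->
  \sum_(i : 'I_n | (I k <= i)%N && e i) G i =
  \sum_(i : 'I_n | inb k i && e i) G i + \sum_(i : 'I_n | (I k.+1 <= i)%N && e i) G i.
Proof.
move=> hk; rewrite (bigID (fun i : 'I_n => (i < I k.+1)%N)) /=; congr (_ + _).
  by apply: eq_bigl => i; rewrite /inblk; case: (I k <= i)%N; case: (e i); case: (i < I k.+1)%N.
apply: eq_bigl => i; rewrite -leqNgt.
case h: (I k.+1 <= i)%N; last by rewrite !andbF.
by rewrite (leq_trans (I_mono hk) h) andbT.
Qed.

Definition cdd k := forall j : 'I_n, (I k <= j)%N ->
  \sum_(i : 'I_n | (I k <= i)%N && (i != j)) `|S k i j| <= `|S k j j|.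

Lemma cdd0 : col_diag_dominant A -> cdd 0.
Proof.
case: HB => I0 _; case: HLU => S0 _.
move=> H j _; rewrite S0 I0; have := H j.
by move=> H2; rewrite (eq_bigl (fun i => i != j)).
Qed.

Lemma dom_of_cdd k : (k < nt)%N -> cdd k -> forall j, j \in [set i : 'I_n | inb k i] ->
   \sum_(i in [set i : 'I_n | inb k i] | i != j) `|S k i j| +
   \sum_(i in [set i : 'I_n | (I k.+1 <= i)%N]) `|S k i j| <= `|S k j j|.
Proof.
move=> hk H j; rewrite inE => hj.
have := H j (proj1 (andP hj)); rewrite split_trail //.
congr (_ + _ <= _); apply: eq_bigl => i; rewrite !inE //.
case h: (I k.+1 <= i)%N => //=; apply/eqP => eij; move: hj; rewrite /inblk -eij.
by rewrite ltnNge h andbF.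
Qed.

Lemma inj_set k : (k < nt)%N -> forall u : 'I_n -> C,
  (forall i, i \in [set i : 'I_n | inb k i] -> \sum_(j in [set i : 'I_n | inb k i]) S k i j * u j = 0) ->
  forall j, j \in [set i : 'I_n | inb k i] -> u j = 0.
Proof.
move=> hk u Hu j; rewrite inE; apply: (stage_inj HLU hk) => i hi.
have := Hu i; rewrite inE => /(_ hi) H0; apply: (etrans _ H0); apply: eq_bigl => l; by rewrite inE.
Qed.

Lemma dd_stage k : (k < nt)%N -> cdd k -> forall u : 'I_n -> C,
  \sum_(i : 'I_n | (I k.+1 <= i)%N) `|\sum_(m : 'I_n | inb k m) S k i m * u m|
  <= \sum_(i : 'I_n | inb k i) `|\sum_(m : 'I_n | inb k m) S k i m * u m|.
Proof.
move=> hk H u.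
have := dd_lemma (erefl _) (dom_of_cdd hk H) (inj_set hk) u.
have E (p : pred 'I_n) (G : 'I_n -> C) : \sum_(i in [set i : 'I_n | p i]) G i = \sum_(i : 'I_n | p i) G i.
  by apply: eq_bigl => i; rewrite inE.
by rewrite !E; under eq_bigr do rewrite E; under [X in _ <= X -> _]eq_bigr do rewrite E.
Qed.

Lemma LU_as_S k : (k < nt)%N -> forall j, exists u : 'I_n -> C, forall i : 'I_n, (I k <= i)%N ->
   \sum_(l : 'I_n | inb k l) L i l * U l j = \sum_(m : 'I_n | inb k m) S k i m * u m.
Proof.
move=> hk j; have [M HM] := stage_LS HLU hk.
exists (fun m => \sum_(l : 'I_n | inb k l) M m l * U l j) => i hi.
rewrite sum_assoc; apply: eq_bigr => l hl; by rewrite HM.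
Qed.

Lemma cdd_step k : (k < nt)%N -> cdd k -> cdd k.+1.
Proof.
move=> hk H j hj.
have [_ /(_ k hk) [_ [_ [_ [_ [_ [Hs _]]]]]]] := HLU.
have [u Hu] := LU_as_S hk j.
have hkj : (I k <= j)%N := leq_trans (I_mono hk) hj.
set w := fun i => \sum_(m : 'I_n | inb k m) S k i m * u m.
have HSw : forall i, inb k i -> S k i j = w i.
  by move=> i hi; rewrite (stage_SU HLU hk hi hj) Hu //; case/andP: hi.
have Hdd := dd_stage hk H u; rewrite -/w in Hdd.
under eq_bigr => i /andP[hi _] do rewrite Hs // Hu ?(leq_trans (I_mono hk) hi) //.
rewrite Hs // Hu // -/w.
under eq_bigr do rewrite -/w.
apply: (@le_trans _ _ (\sum_(i : 'I_n | (I k.+1 <= i)%N && (i != j)) `|S k i j| +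
                       (\sum_(i : 'I_n | (I k.+1 <= i)%N) `|w i| - `|w j|))).
  rewrite (bigD1 j (P := fun i : 'I_n => (I k.+1 <= i)%N)) //= [_ + \sum_(i : 'I_n | _) _]addrC addrK.
  rewrite -big_split /=; apply: ler_sum => i _; exact: ler_normB.
apply: (@le_trans _ _ (`|S k j j| - `|w j|)); last exact: lerB_dist.
rewrite addrA lerD2r.
have := H j hkj; rewrite split_trail // => H2.
apply: le_trans H2; rewrite addrC lerD2r.
have -> : \sum_(i : 'I_n | inb k i && (i != j)) `|S k i j| = \sum_(i : 'I_n | inb k i) `|S k i j|.
  apply: eq_bigl => i; case hi: (inb k i) => //=; apply/eqP => eij; move: hi.
  by rewrite eij /inblk ltnNge hj andbF.
apply: le_trans Hdd _; apply: ler_sum => i hi; by rewrite HSw.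
Qed.
End PartA.
Section Norms.
Variable F : numDomainType.
Variable T : finType.

Lemma sumsq_le_sqsum (p : pred T) (r : T -> F) : (forall i, 0 <= r i) ->
  \sum_(i | p i) r i ^+ 2 <= (\sum_(i | p i) r i) ^+ 2.
Proof.
move=> r0; rewrite expr2 big_distrl /=; apply: ler_sum => i pi.
rewrite expr2 ler_wpM2l // (bigD1 i) //= lerDl sumr_ge0 //.
Qed.

Lemma sqsum_le_card (p : pred T) (r : T -> F) : (forall i, 0 <= r i) ->
  (\sum_(i | p i) r i) ^+ 2 <= #|[pred i | p i]|%:R * \sum_(i | p i) r i ^+ 2.
Proof.
move=> r0.
have E : (\sum_(i | p i) \sum_(j | p j) (r i - r j) ^+ 2) =
   (#|[pred i | p i]|%:R * \sum_(i | p i) r i ^+ 2) *+ 2 - ((\sum_(i | p i) r i) ^+ 2) *+ 2.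
  have cst (x : F) : \sum_(j | p j) x = x *+ #|[pred i | p i]|.
    by rewrite -sumr_const; apply: eq_bigl => j; rewrite inE.
  have E1 : forall i j, (r i - r j) ^+ 2 = r i ^+ 2 + r j ^+ 2 - (r i * r j) *+ 2.
    by move=> i j; rewrite sqrrB; ring.
  under eq_bigr do under eq_bigr do rewrite E1.
  have -> : \sum_(i | p i) \sum_(j | p j) (r i ^+ 2 + r j ^+ 2 - (r i * r j) *+ 2) =
     \sum_(i | p i) \sum_(j | p j) r i ^+ 2 + \sum_(i | p i) \sum_(j | p j) r j ^+ 2
     - \sum_(i | p i) \sum_(j | p j) (r i * r j) *+ 2.
    rewrite -big_split -sumrB /=; apply: eq_bigr => i _; by rewrite -big_split -sumrB.
  have -> : \sum_(i | p i) \sum_(j | p j) r i ^+ 2 = #|[pred i | p i]|%:R * \sum_(i | p i) r i ^+ 2.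
    by under eq_bigr do rewrite cst; rewrite sumrMnl mulr_natl.
  have -> : \sum_(i | p i) \sum_(j | p j) r j ^+ 2 = #|[pred i | p i]|%:R * \sum_(i | p i) r i ^+ 2.
    by rewrite cst mulr_natl.
  have -> : \sum_(i | p i) \sum_(j | p j) (r i * r j) *+ 2 = ((\sum_(i | p i) r i) ^+ 2) *+ 2.
    rewrite expr2 big_distrl /= -sumrMnl; apply: eq_bigr => i _; by rewrite big_distrr /= -sumrMnl.
  by rewrite mulr2n.
have : 0 <= (#|[pred i | p i]|%:R * \sum_(i | p i) r i ^+ 2) *+ 2 - ((\sum_(i | p i) r i) ^+ 2) *+ 2.
  by rewrite -E; apply: sumr_ge0 => i _; apply: sumr_ge0 => j _; rewrite -realEsqr; apply: realB; exact: ger0_real.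
by rewrite -mulrnBl pmulrn_lge0 // subr_ge0.
Qed.
End Norms.
Section Cols.
Variable R : realType.
Local Notation C := (R[i]).
Variables (n nt : nat) (I : nat -> nat) (A L U : 'M[C]_n) (S : nat -> 'M[C]_n).
Hypothesis HB : is_blocking n nt I.
Hypothesis HLU : block_LU nt I A L U S.

Local Notation inb k := (@inblk I k n).

Definition Nsq (p : pred 'I_n) (v : 'I_n -> C) := \sum_(i | p i) `|v i| ^+ 2.
Definition Lcol k (x : 'I_n -> C) (i : 'I_n) := \sum_(l : 'I_n | inb k l) L i l * x l.

Lemma Nsq_ge0 p v : 0 <= Nsq p v.
Proof. by apply: sumr_ge0 => i _; rewrite exprn_ge0. Qed.

Lemma unitary_pres k : (k < nt)%N -> forall x, Nsq (inb k) (Lcol k x) = Nsq (inb k) x.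
Proof.
move=> hk x; have [_ /(_ k hk) [_ [Hu1 _]]] := HLU.
rewrite /Nsq /Lcol.
under eq_bigr do rewrite sqr_normc rmorph_sum big_distrl /=.
under eq_bigr do under eq_bigr do rewrite big_distrr /=.
rewrite exchange_big /=.
under eq_bigr do rewrite exchange_big /=.
under [RHS]eq_bigr do rewrite sqr_normc.
apply: eq_bigr => l hl.
transitivity (\sum_(m : 'I_n | inb k m) (x l * (x m)^*%C) * (\sum_(i : 'I_n | inb k i) (L i l)^*%C * L i m)^*%C).
  apply: eq_bigr => m hm; rewrite rmorph_sum big_distrr /=; apply: eq_bigr => i hi.
  by rewrite !rmorphM /= conjcK; ring.
under eq_bigr => m hm do rewrite (Hu1 l m hl hm).
rewrite (bigD1 l) //= eqxx big1 ?addr0.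
  by rewrite rmorph1 mulr1.
by move=> m /andP[_]; rewrite eq_sym => /negbTE ->; rewrite rmorph0 mulr0.
Qed.

Lemma split3 k (G : 'I_n -> C) : (k < nt)%N ->
  \sum_(i < n) G i = \sum_(i < n | (i < I k)%N) G i + (\sum_(i < n | inb k i) G i +
     \sum_(i < n | (I k.+1 <= i)%N) G i).
Proof.
move=> hk; rewrite (bigID (fun i : 'I_n => (i < I k)%N)) /=; congr (_ + _).
rewrite (bigID (fun i : 'I_n => (i < I k.+1)%N)) /=; congr (_ + _); apply: eq_bigl => i.
  by rewrite /inblk -leqNgt.
rewrite -!leqNgt; case h: (I k.+1 <= i)%N; last by rewrite andbF.
by rewrite (leq_trans (I_mono HB hk) h).
Qed.

Lemma col_bound k : (k < nt)%N -> forall x (c2 : C),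
  Nsq (fun i : 'I_n => (I k.+1 <= i)%N) (Lcol k x) <= c2 * Nsq (inb k) x ->
  Nsq predT (Lcol k x) <= (1 + c2) * Nsq (inb k) x.
Proof.
move=> hk x c2 H.
have [_ /(_ k hk) [_ [_ [_ [_ [_ [_ [HL0 _]]]]]]]] := HLU.
rewrite /Nsq (split3 _ hk) big1 ?add0r; last first.
  move=> i hi; rewrite /Lcol big1 ?normr0 ?expr0n //= => l hl.
  by rewrite HL0 // mul0r.
rewrite mulrDl mul1r; apply: lerD => //.
by have := unitary_pres hk x; rewrite /Nsq => ->.
Qed.

End Cols.
Section Asm.
Variable R : realType.
Local Notation C := (R[i]).
Variables (n nt : nat) (I : nat -> nat) (A L U : 'M[C]_n) (S : nat -> 'M[C]_n).
Hypothesis HB : is_blocking n nt I.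
Hypothesis HLU : block_LU nt I A L U S.

Local Notation inb k := (@inblk I k n).

Lemma eqle (F : numDomainType) (a b : F) : a = b -> a <= b.
Proof. by move->. Qed.

Lemma sq_mono (F : numDomainType) (a b : F) : 0 <= a -> a <= b -> a ^+ 2 <= b ^+ 2.
Proof. by move=> a0 ab; rewrite !expr2 ler_pM. Qed.

Lemma card_blk k : (k < nt)%N -> (#|[pred i : 'I_n | inb k i]| <= I k.+1 - I k)%N.
Proof.
move=> hk; rewrite cardE -(size_map (@nat_of_ord n)) -(size_iota (I k) (I k.+1 - I k)).
apply: uniq_leq_size; first by rewrite map_inj_uniq ?enum_uniq //; apply: val_inj.
move=> m; case/seq.mapP => i; rewrite mem_enum inE => /andP[h1 h2] ->.
by rewrite mem_iota h1 subnKC // (I_mono HB hk).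
Qed.

Lemma blk_a k : (k < nt)%N -> cdd I S k -> forall x,
  Nsq (fun i : 'I_n => (I k.+1 <= i)%N) (Lcol I L k x) <=
    #|[pred i : 'I_n | inb k i]|%:R * Nsq (inb k) x.
Proof.
move=> hk H x.
have [M HM] := stage_LS HLU hk.
pose u := fun m => \sum_(l : 'I_n | inb k l) M m l * x l.
have E : forall i : 'I_n, (I k <= i)%N -> Lcol I L k x i = \sum_(m : 'I_n | inb k m) S k i m * u m.
  move=> i hi; rewrite /Lcol /u sum_assoc; apply: eq_bigr => l hl; by rewrite HM.
have Hd := dd_stage HB HLU hk H u.
rewrite -(unitary_pres HLU hk x).
apply: (@le_trans _ _ ((\sum_(i : 'I_n | inb k i) `|Lcol I L k x i|) ^+ 2)).
  apply: le_trans (sumsq_le_sqsum _ _) _ => //.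
  apply: sq_mono; first by apply: sumr_ge0.
  apply: (le_trans _ (le_trans Hd _)).
    by apply: eqle; apply: eq_bigr => i hi; rewrite E // (leq_trans (I_mono HB hk) hi).
  by apply: eqle; apply: eq_bigr => i /andP[hi _]; rewrite E.
by apply: sqsum_le_card.
Qed.

Lemma partition_sum (G : 'I_n -> C) :
  \sum_(j < n) G j = \sum_(k < nt) \sum_(j : 'I_n | inb k j) G j.
Proof.
case: HB => I0 [Int Hlt].
have H : forall m, (m <= nt)%N -> \sum_(j : 'I_n | (j < I m)%N) G j = \sum_(k < m) \sum_(j : 'I_n | inb k j) G j.
  elim=> [|m IH] hm.
    by rewrite big_ord0 big_pred0 // => j; rewrite I0.
  rewrite big_ord_recr /= -IH ?(ltnW hm) //.
  rewrite (bigID (fun j : 'I_n => (j < I m)%N)) /=; congr (_ + _); apply: eq_bigl => j.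
    case h: (j < I m)%N; rewrite ?andbF ?andbT //.
    by rewrite (leq_trans h) // ltnW // Hlt.
  by rewrite /inblk -leqNgt andbC.
rewrite -H //; apply: eq_bigl => j; by rewrite Int ltn_ord.
Qed.

End Asm.
Section Asm2.
Variable R : realType.
Local Notation C := (R[i]).
Local Open Scope complex_scope.

Lemma vnorm2_ge0 m (x : 'cV[C]_m) : 0 <= vnorm2 x.
Proof. exact: sqrtr_ge0. Qed.

Lemma vnorm2_Nsq m (x : 'cV[C]_m) :
  ((vnorm2 x ^+ 2)%:C) = Nsq predT (fun i => x i 0).
Proof.
rewrite /vnorm2 sqr_sqrtr; last by apply: sumr_ge0 => i _; rewrite addr_ge0 ?sqr_ge0.
rewrite rmorph_sum /Nsq; apply: eq_bigr => i _; by rewrite -add_Re2_Im2.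
Qed.

Lemma specnorm_le m (M : 'M[C]_m) (T : R) : 0 <= T ->
  (forall x : 'cV[C]_m, vnorm2 x = 1 -> vnorm2 (M *m x) <= T) -> specnorm M <= T.
Proof.
move=> T0 H; rewrite /specnorm.
set E := [set _ | _ in _]%classic.
have [ne|e0] := pselect (E !=set0)%classic.
  by apply: ge_sup => // y [x hx <-]; apply: H.
have -> : E = set0%classic.
  by apply/seteqP; split => y // hy; apply: e0; exists y.
by rewrite sup0.
Qed.

Lemma specnorm_from_Nsq m (M : 'M[C]_m) (T : R) : 0 <= T ->
  (forall x : 'I_m -> C, Nsq predT (fun i => \sum_j M i j * x j) <= (T ^+ 2)%:C * Nsq predT x) ->
  specnorm M <= T.
Proof.
move=> T0 H; apply: specnorm_le => // x hx.
have := H (fun i => x i 0).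
have -> : (fun i => \sum_j M i j * x j 0) = (fun i => (M *m x) i 0).
  by apply: funext => i; rewrite mxE.
rewrite -!vnorm2_Nsq hx expr1n mulr1 lecR.
by rewrite ler_pXn2r // nnegrE ?vnorm2_ge0.
Qed.
End Asm2.

Section Asm3.
Variable R : realType.
Local Notation C := (R[i]).
Local Open Scope complex_scope.
Variables (n nt : nat) (I : nat -> nat) (A L U : 'M[C]_n) (S : nat -> 'M[C]_n).
Hypothesis HB : is_blocking n nt I.
Hypothesis HLU : block_LU nt I A L U S.
Local Notation inb k := (@inblk I k n).

Lemma Lx_bound (c2 : C) : 0 <= c2 ->
  (forall k, (k < nt)%N -> forall x, Nsq (fun i : 'I_n => (I k.+1 <= i)%N) (Lcol I L k x)
       <= c2 * Nsq (inb k) x) ->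
  forall x : 'I_n -> C, Nsq predT (fun i => \sum_j L i j * x j) <= nt%:R * (1 + c2) * Nsq predT x.
Proof.
move=> c20 H x; rewrite /Nsq.
under eq_bigr do rewrite (partition_sum HB).
have cnt : #|[pred k : 'I_nt | predT k]| = nt by rewrite -[RHS]card_ord; apply: eq_card.
apply: (@le_trans _ _ (\sum_(i < n) nt%:R * \sum_(k < nt) `|Lcol I L k x i| ^+ 2)).
  apply: ler_sum => i _.
  apply: le_trans (sq_mono _ (ler_norm_sum _ _ _)) _ => //.
  have := @sqsum_le_card _ _ predT (fun k : 'I_nt => `|Lcol I L k x i|) (fun _ => normr_ge0 _).
  by rewrite cnt.
rewrite -mulr_sumr -mulrA ler_wpM2l // exchange_big /=.
rewrite (partition_sum HB) mulr_sumr; apply: ler_sum => k _.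
have := col_bound HB HLU (ltn_ord k) (H k (ltn_ord k) x).
by rewrite /Nsq; under eq_bigl do rewrite /=.
Qed.

Lemma assemble (c : R) : 0 <= c ->
  (forall k, (k < nt)%N -> forall x, Nsq (fun i : 'I_n => (I k.+1 <= i)%N) (Lcol I L k x)
       <= (c ^+ 2)%:C * Nsq (inb k) x) ->
  specnorm L <= (1 + c) * nt%:R.
Proof.
move=> c0 H; apply: specnorm_from_Nsq; first by rewrite mulr_ge0 ?addr_ge0.
move=> x; apply: le_trans (Lx_bound _ H x) _; first by rewrite lecR sqr_ge0.
apply: ler_wpM2r; first exact: Nsq_ge0.
have E : ((nt%:R * (1 + c ^+ 2))%:C) = nt%:R * (1 + (c ^+ 2)%:C) :> C.
  by rewrite rmorphM rmorphD rmorph1 rmorph_nat.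
rewrite -E lecR.
case: nt => [|m]; first by rewrite !mul0r mulr0 expr0n.
have t1 : 1 <= m.+1%:R :> R by rewrite ler1n.
move: (m.+1%:R) t1 => t t1.
have t0 : 0 <= t := le_trans ler01 t1.
have h1 : 0 <= (t - 1) * ((1 + c) ^+ 2 * t).
  by apply: mulr_ge0; [rewrite subr_ge0 | apply: mulr_ge0; [apply: sqr_ge0|]].
have h2 : 0 <= c * t by apply: mulr_ge0.
nra.
Qed.
End Asm3.
Section FinA.
Variable R : realType.
Local Notation C := (R[i]).
Local Open Scope complex_scope.
Variables (n nt : nat) (I : nat -> nat) (A L U : 'M[C]_n) (S : nat -> 'M[C]_n).
Hypothesis HB : is_blocking n nt I.
Hypothesis HLU : block_LU nt I A L U S.
Local Notation inb k := (@inblk I k n).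

Lemma cdd_all : col_diag_dominant A -> forall k, (k <= nt)%N -> cdd I S k.
Proof.
move=> H; elim=> [|k IH] hk; first exact: cdd0 HB HLU H.
apply: (cdd_step HB HLU hk); apply: IH; exact: ltnW.
Qed.

Lemma partA : col_diag_dominant A ->
  specnorm L <= ((max_blksize nt I)%:R * Num.sqrt (max_blksize nt I)%:R + 1) * nt%:R.
Proof.
move=> H; set nb := max_blksize nt I.
apply: (@le_trans _ _ ((1 + Num.sqrt nb%:R) * nt%:R)).
  apply: (assemble HB HLU (c := Num.sqrt nb%:R)); first exact: sqrtr_ge0.
  move=> k hk x; rewrite sqr_sqrtr ?ler0n //.
  apply: le_trans (blk_a HB HLU hk (cdd_all H (ltnW hk)) x) _.
  apply: ler_wpM2r; first exact: Nsq_ge0.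
  rewrite -(rmorph_nat (real_complex R)) lecR ler_nat.
  apply: leq_trans (card_blk HB hk) _.
  exact: (@leq_bigmax _ (fun k : 'I_nt => I k.+1 - I k)%N (Ordinal hk)).
apply: ler_wpM2r => //; rewrite addrC lerD2r.
case: (posnP nb) => [->|nb0]; first by rewrite mul0r sqrtr0.
by rewrite ler_peMl ?sqrtr_ge0 // ler1n.
Qed.
End FinA.
Section CS.
Variable R : realType.
Local Notation C := (R[i]).
Local Open Scope complex_scope.

Lemma real_ge0E (a : C) : 0 <= a -> a = (complex.Re a)%:C.
Proof. by move=> a0; rewrite RRe_real // ger0_real. Qed.

Lemma herm_of (T : Type) (f : T -> T -> C) (x y : T) (comb : C -> T) :
  (forall t, f (comb t) (comb t) = f x x + t * f x y + t^* * f y x + t * t^* * f y y) ->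
  (forall t, 0 <= f (comb t) (comb t)) -> 0 <= f y y ->
  f y x = (f x y)^*.
Proof.
move=> Hexp Hpos Hy.
have Hx : 0 <= f x x.
  by have := Hpos 0; rewrite Hexp !mul0r rmorph0 !mul0r !addr0.
have r1 := Hpos 1; rewrite Hexp rmorph1 !mul1r in r1.
have r2 := Hpos 'i; rewrite Hexp in r2.
have ii : 'i * 'i^* = 1 :> C by rewrite /= /conjc; simpc.
rewrite ii mul1r in r2.
move: r1 r2; rewrite (real_ge0E Hx) (real_ge0E Hy).
case: (f x y) => a1 a2; case: (f y x) => b1 b2.
rewrite !lecE /=; simpc => /andP[/eqP h1 _] /andP[/eqP h2 _].
rewrite /conjc; apply/eqP; rewrite eq_complex /=; apply/andP; split; apply/eqP.
  by move: h2; lra.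
by move: h1; lra.
Qed.

End CS.
Section CS2.
Variable R : realType.
Local Notation C := (R[i]).
Local Open Scope complex_scope.

Lemma cs_of (T : Type) (f : T -> T -> C) (x y : T) (comb : C -> T) :
  (forall t, f (comb t) (comb t) = f x x + t * f x y + t^* * f y x + t * t^* * f y y) ->
  (forall t, 0 <= f (comb t) (comb t)) -> 0 <= f y y ->
  `|f x y| ^+ 2 <= f x x * f y y.
Proof.
move=> Hexp Hpos Hy.
have hb := herm_of Hexp Hpos Hy.
have Hx : 0 <= f x x.
  by have := Hpos 0; rewrite Hexp !mul0r rmorph0 !mul0r !addr0.
have key : forall s : R, 0 <= complex.Re (f x x) - 2 * s * (complex.Re (f x y) ^+ 2 + complex.Im (f x y) ^+ 2)
     + s ^+ 2 * (complex.Re (f x y) ^+ 2 + complex.Im (f x y) ^+ 2) * complex.Re (f y y).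
  move=> s; have := Hpos (- (s%:C) * (f x y)^*); rewrite Hexp hb.
  rewrite (real_ge0E Hx) (real_ge0E Hy).
  case: (f x y) => a1 a2 /=.
  rewrite /conjc /= lecE /=; simpc => /andP[_ H].
  by move: H; nra.
rewrite (real_ge0E Hx) (real_ge0E Hy) -add_Re2_Im2 -rmorphM lecR.
have F0 : 0 <= complex.Re (f x x) by rewrite -ler0c -real_ge0E.
have G0 : 0 <= complex.Re (f y y) by rewrite -ler0c -real_ge0E.
have m0 : 0 <= complex.Re (f x y) ^+ 2 + complex.Im (f x y) ^+ 2 by rewrite addr_ge0 ?sqr_ge0.
move: key F0 G0 m0.
move: (complex.Re (f x x)) (complex.Re (f y y)) (complex.Re (f x y) ^+ 2 + complex.Im (f x y) ^+ 2) => F G m.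
move=> key F0 G0 m0.
case: (eqVneq G 0) => [G00|Gn0].
  rewrite G00 mulr0; case: (eqVneq m 0) => [->//|mn0].
  have := key ((F + 1) / (2 * m)).
  have -> : F - 2 * ((F + 1) / (2 * m)) * m + ((F + 1) / (2 * m)) ^+ 2 * m * G = -1.
    by rewrite G00; field.
  by rewrite oppr_ge0 ler10.
have Gp : 0 < G by rewrite lt_def Gn0 G0.
have := key G^-1.
have -> : F - 2 * G^-1 * m + G^-1 ^+ 2 * m * G = (F * G - m) * G^-1.
  by field.
by rewrite pmulr_lge0 ?invr_gt0 // subr_ge0.
Qed.
End CS2.
Section QF.
Variable R : realType.
Local Notation C := (R[i]).
Local Open Scope complex_scope.
Variable n : nat.

Definition qf (H : 'M[C]_n) (x y : 'I_n -> C) := \sum_i \sum_j (x i)^* * H i j * y j.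
Definition dotp (x y : 'I_n -> C) := \sum_i (x i)^* * y i.
Definition comb (x y : 'I_n -> C) (t : C) := fun i => x i + t * y i.

Lemma qf_exp H x y t : qf H (comb x y t) (comb x y t) =
  qf H x x + t * qf H x y + t^* * qf H y x + t * t^* * qf H y y.
Proof.
rewrite /qf /comb !mulr_sumr -!big_split /=; apply: eq_bigr => i _.
rewrite !mulr_sumr -!big_split /=; apply: eq_bigr => j _.
rewrite !rmorphD !rmorphM /=; ring.
Qed.

Lemma dotp_exp x y t : dotp (comb x y t) (comb x y t) =
  dotp x x + t * dotp x y + t^* * dotp y x + t * t^* * dotp y y.
Proof.
rewrite /dotp /comb !mulr_sumr -!big_split /=; apply: eq_bigr => i _.
rewrite !rmorphD !rmorphM /=; ring.
Qed.

Lemma dotp_Nsq x : dotp x x = Nsq predT x.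
Proof. by rewrite /dotp /Nsq; apply: eq_bigr => i _; rewrite sqr_normc mulrC. Qed.

Lemma dotp_ge0 x : 0 <= dotp x x.
Proof. rewrite dotp_Nsq; exact: Nsq_ge0. Qed.

Lemma dotp_cs x y : `|dotp x y| ^+ 2 <= dotp x x * dotp y y.
Proof. apply: (cs_of (comb := comb x y)); [move=> t; exact: dotp_exp | move=> t; exact: dotp_ge0 | exact: dotp_ge0]. Qed.

Lemma dotp_herm x y : dotp y x = (dotp x y)^*.
Proof. apply: (herm_of (comb := comb x y)); [move=> t; exact: dotp_exp | move=> t; exact: dotp_ge0 | exact: dotp_ge0]. Qed.

End QF.
Section Op.
Variable R : realType.
Local Notation C := (R[i]).
Local Open Scope complex_scope.
Variable n : nat.

Definition mv (M : 'M[C]_n) (x : 'I_n -> C) := fun i => \sum_j M i j * x j.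

Lemma Nsq_scale (c : C) (v : 'I_n -> C) : Nsq predT (fun i => c * v i) = `|c| ^+ 2 * Nsq predT v.
Proof. by rewrite /Nsq mulr_sumr; apply: eq_bigr => i _; rewrite normrM exprMn. Qed.

Lemma Nsq_term (v : 'I_n -> C) j : `|v j| ^+ 2 <= Nsq predT v.
Proof. by rewrite /Nsq (bigD1 j) //= lerDl sumr_ge0 // => i _; rewrite exprn_ge0. Qed.

Lemma Nsq0 (v : 'I_n -> C) : Nsq predT v = 0 -> forall j, v j = 0.
Proof.
move=> H j; have := psumr_eq0P (fun i _ => exprn_ge0 2 (normr_ge0 (v i))) H (erefl true : predT j).
by move/eqP; rewrite expf_eq0 /= normr_eq0 => /eqP.
Qed.

Lemma mv_bound (M : 'M[C]_n) (x : 'I_n -> C) : Nsq predT x <= 1 ->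
  Nsq predT (mv M x) <= \sum_i (\sum_j `|M i j|) ^+ 2.
Proof.
move=> hx; apply: ler_sum => i _; apply: sq_mono => //.
apply: le_trans (ler_norm_sum _ _ _) _; apply: ler_sum => j _.
rewrite normrM ler_piMr //.
have h := le_trans (Nsq_term x j) hx.
by rewrite -(@ler_pXn2r _ 2) ?nnegrE // expr1n.
Qed.

Lemma vnorm2_1 (x : 'cV[C]_n) : vnorm2 x = 1 -> Nsq predT (fun i => x i 0) = 1.
Proof. by move=> h; rewrite -vnorm2_Nsq h expr1n. Qed.

Lemma mv_mx (M : 'M[C]_n) (x : 'cV[C]_n) : (fun i => (M *m x) i 0) = mv M (fun i => x i 0).
Proof. by apply: funext => i; rewrite mxE. Qed.

Lemma specnorm_ub (M : 'M[C]_n) (x : 'cV[C]_n) : vnorm2 x = 1 -> vnorm2 (M *m x) <= specnorm M.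
Proof.
move=> hx; rewrite /specnorm; apply: sup_upper_bound; last by exists x.
split; first by exists (vnorm2 (M *m x)), x.
exists (1 + complex.Re (\sum_i (\sum_j `|M i j|) ^+ 2)) => _ [z hz <-].
have K0 : 0 <= \sum_i (\sum_j `|M i j|) ^+ 2 :> C by apply: sumr_ge0 => i _; rewrite exprn_ge0 ?sumr_ge0.
have H : (vnorm2 (M *m z) ^+ 2)%:C <= (complex.Re (\sum_i (\sum_j `|M i j|) ^+ 2))%:C.
  rewrite vnorm2_Nsq mv_mx -real_ge0E //; apply: mv_bound.
  by rewrite (vnorm2_1 hz).
rewrite lecR in H; have v0 := vnorm2_ge0 (M *m z).
move: H v0; move: (vnorm2 (M *m z)) (complex.Re _) => v K H v0.
nra.
Qed.
End Op.
Section Op2.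
Variable R : realType.
Local Notation C := (R[i]).
Local Open Scope complex_scope.
Variable n : nat.

Lemma specnorm_ge0 (M : 'M[C]_n) : 0 <= specnorm M.
Proof.
have [[y [x hx _]]|e0] := pselect ([set vnorm2 (M *m x) | x in [set x : 'cV[C]_n | vnorm2 x = 1]]%classic !=set0)%classic.
  exact: le_trans (vnorm2_ge0 (M *m x)) (specnorm_ub M hx).
rewrite /specnorm.
have -> : [set vnorm2 (M *m x) | x in [set x : 'cV[C]_n | vnorm2 x = 1]]%classic = set0%classic.
  by apply/seteqP; split => y // hy; apply: e0; exists y.
by rewrite sup0.
Qed.

Lemma opnorm (M : 'M[C]_n) (x : 'I_n -> C) :
  Nsq predT (mv M x) <= ((specnorm M) ^+ 2)%:C * Nsq predT x.
Proof.
have [N0|Nn0] := eqVneq (Nsq predT x) 0.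
  have x0 := Nsq0 N0.
  rewrite N0 mulr0 /Nsq big1 // => i _; rewrite /mv big1 ?normr0 ?expr0n // => j _.
  by rewrite x0 mulr0.
have Np : 0 < Nsq predT x by rewrite lt_def Nn0 Nsq_ge0.
set N := Nsq predT x in Nn0 Np *.
have NE : N = (complex.Re N)%:C by apply: real_ge0E; apply: ltW.
have NRp : 0 < complex.Re N by rewrite -ltcR -NE.
set s := Num.sqrt (complex.Re N).
have sp : 0 < s by rewrite sqrtr_gt0.
have s2 : s ^+ 2 = complex.Re N by rewrite sqr_sqrtr // ltW.
set c : C := (s^-1)%:C.
have c2 : `|c| ^+ 2 = ((s ^+ 2)^-1)%:C.
  rewrite ger0_norm; last by rewrite ler0c invr_ge0 ltW.
  by rewrite -rmorphXn exprVn.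
pose x' : 'cV[C]_n := \col_i (c * x i).
have ex' : (fun i => x' i 0) = (fun i => c * x i) by apply: funext => i; rewrite mxE.
have hx' : vnorm2 x' = 1.
  have : ((vnorm2 x' ^+ 2)%:C) = 1 :> C.
    rewrite vnorm2_Nsq ex' Nsq_scale c2 -/N NE s2 -rmorphM mulVf //.
    by rewrite gt_eqF.
  move/(congr1 (@complex.Re R)) => /= h.
  by apply/eqP; rewrite -(@eqrXn2 _ 2) ?vnorm2_ge0 // h expr1n.
have := specnorm_ub M hx'.
rewrite -(@ler_pXn2r _ 2) ?nnegrE ?vnorm2_ge0 ?specnorm_ge0 // -lecR vnorm2_Nsq mv_mx ex'.
have -> : mv M (fun i => c * x i) = (fun i => c * mv M x i).
  apply: funext => i; rewrite /mv mulr_sumr; apply: eq_bigr => j _; ring.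
rewrite Nsq_scale c2 => H.
have s20 : 0 <= (s ^+ 2)%:C :> C by rewrite ler0c exprn_ge0 // ltW.
have := ler_wpM2l s20 H; rewrite mulrA -rmorphM mulfV ?gt_eqF ?exprn_gt0 //.
rewrite mul1r => H2; apply: le_trans H2 _.
by rewrite mulrC NE s2.
Qed.
End Op2.
Section AF.
Variable R : realType.
Local Notation C := (R[i]).
Local Open Scope complex_scope.
Variable n : nat.

Lemma qf_mv (A : 'M[C]_n) x y : qf A x y = dotp x (mv A y).
Proof.
rewrite /qf /dotp /mv; apply: eq_bigr => i _; rewrite mulr_sumr; apply: eq_bigr => j _.
by rewrite mulrA.
Qed.

Lemma sq_norm_ge0 (a : C) : 0 <= a -> `|a| ^+ 2 = a ^+ 2.
Proof. by move=> a0; rewrite ger0_norm. Qed.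

Lemma Aform_ub (A : 'M[C]_n) : (forall z, 0 <= qf A z z) ->
  forall v, qf A v v <= (specnorm A)%:C * Nsq predT v.
Proof.
move=> Hp v.
have q0 := Hp v.
rewrite -(@ler_pXn2r _ 2) ?nnegrE //; last first.
  by rewrite mulr_ge0 ?Nsq_ge0 // ler0c specnorm_ge0.
rewrite -sq_norm_ge0 // qf_mv.
apply: le_trans (dotp_cs _ _) _.
rewrite !dotp_Nsq exprMn (expr2 (Nsq predT v)) mulrCA ler_wpM2l ?Nsq_ge0 //.
by rewrite -rmorphXn; apply: opnorm.
Qed.

Lemma mv_inv (A : 'M[C]_n) x : A \in unitmx -> mv A (mv (invmx A) x) = x.
Proof.
move=> hA; apply: funext => i; rewrite /mv.
under eq_bigr do rewrite big_distrr /=.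
rewrite exchange_big /=.
transitivity (\sum_j (A *m invmx A) i j * x j).
  by apply: eq_bigr => j _; rewrite mxE big_distrl /=; apply: eq_bigr => l _; rewrite mulrA.
rewrite mulmxV //; rewrite (bigD1 i) //= big1 ?addr0.
  by rewrite mxE eqxx mul1r.
by move=> j /negbTE nji; rewrite mxE eq_sym nji mul0r.
Qed.

Lemma qf_cs (A : 'M[C]_n) : (forall z, 0 <= qf A z z) -> forall x y,
  `|qf A x y| ^+ 2 <= qf A x x * qf A y y.
Proof.
move=> Hp x y; apply: (cs_of (comb := comb x y)); [move=> t; exact: qf_exp | move=> t; exact: Hp | exact: Hp].
Qed.

Lemma qf_herm (A : 'M[C]_n) : (forall z, 0 <= qf A z z) -> forall x y,
  qf A y x = (qf A x y)^*.
Proof.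
move=> Hp x y; apply: (herm_of (comb := comb x y)); [move=> t; exact: qf_exp | move=> t; exact: Hp | exact: Hp].
Qed.

Lemma Aform_lb (A : 'M[C]_n) : (forall z, 0 <= qf A z z) -> A \in unitmx ->
  forall x, Nsq predT x <= (specnorm (invmx A))%:C * qf A x x.
Proof.
move=> Hp hA x.
set s := specnorm (invmx A).
set y := mv (invmx A) x.
have Ay : mv A y = x by apply: mv_inv.
have e1 : qf A x y = Nsq predT x by rewrite qf_mv Ay dotp_Nsq.
have e2 : qf A y y = dotp y x by rewrite qf_mv Ay.
have cs := qf_cs Hp x y; rewrite e1 e2 in cs.
have N0 := @Nsq_ge0 _ _ predT x.
have d0 : 0 <= dotp y x by rewrite -e2.
have hd : dotp y x <= s%:C * Nsq predT x.
  rewrite -(@ler_pXn2r _ 2) ?nnegrE //; last by rewrite mulr_ge0 // ler0c specnorm_ge0.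
  rewrite -sq_norm_ge0 //; apply: le_trans (dotp_cs _ _) _.
  rewrite !dotp_Nsq exprMn expr2 mulrA ler_wpM2r //.
  by rewrite -rmorphM -expr2; apply: opnorm.
have [Nz|Nnz] := eqVneq (Nsq predT x) 0.
  by rewrite Nz mulr_ge0 // ?ler0c ?specnorm_ge0 // Hp.
have Np : 0 < Nsq predT x by rewrite lt_def Nnz N0.
rewrite sq_norm_ge0 // in cs.
have := le_trans cs (ler_wpM2l (Hp x) hd).
rewrite expr2 mulrCA mulrA ler_pM2r // mulrC //.
Qed.

End AF.
Section SB.
Variable R : realType.
Local Notation C := (R[i]).
Local Open Scope complex_scope.
Variables (n nt : nat) (I : nat -> nat) (A L U : 'M[C]_n) (S : nat -> 'M[C]_n).
Hypothesis HB : is_blocking n nt I.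
Hypothesis HLU : block_LU nt I A L U S.
Local Notation inb k := (@inblk I k n).

Lemma sum_supp (p : pred 'I_n) (F u : 'I_n -> C) : (forall j, ~~ p j -> u j = 0) ->
  \sum_j F j * u j = \sum_(j | p j) F j * u j.
Proof.
move=> H; rewrite (bigID p) /= [X in _ + X]big1 ?addr0 // => j hj.
by rewrite H // mulr0.
Qed.

Lemma sum_suppl (p : pred 'I_n) (F u : 'I_n -> C) : (forall j, ~~ p j -> u j = 0) ->
  \sum_j (u j)^* * F j = \sum_(j | p j) (u j)^* * F j.
Proof.
move=> H; rewrite (bigID p) /= [X in _ + X]big1 ?addr0 // => j hj.
by rewrite H // rmorph0 mul0r.
Qed.

Definition supp k (z : 'I_n -> C) := forall i : 'I_n, (i < I k)%N -> z i = 0.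

Definition Inv k :=
  (forall z, supp k z -> 0 <= qf (S k) z z) /\
  (forall z, supp k z -> qf (S k) z z <= qf A z z) /\
  (forall z, supp k z -> exists x, (forall i : 'I_n, (I k <= i)%N -> x i = z i) /\
                                   qf A x x = qf (S k) z z).

Lemma Inv0 : (forall z, 0 <= qf A z z) -> Inv 0.
Proof.
move=> Hp; case: HLU => S0 _; rewrite /Inv S0; split => // ; split => // z _.
by exists z.
Qed.

Lemma supp_comb k z u t : supp k z -> supp k u -> supp k (comb z u t).
Proof. by move=> hz hu i hi; rewrite /comb hz // hu // mulr0 addr0. Qed.

Lemma herm_k k : Inv k -> forall z u, supp k z -> supp k u ->
  qf (S k) u z = (qf (S k) z u)^*.
Proof.
move=> [H1 _] z u hz hu; apply: (herm_of (comb := comb z u)).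
- move=> t; exact: qf_exp.
- move=> t; apply: H1; exact: supp_comb.
- exact: H1.
Qed.

Lemma cs_k k : Inv k -> forall z u, supp k z -> supp k u ->
  `|qf (S k) z u| ^+ 2 <= qf (S k) z z * qf (S k) u u.
Proof.
move=> [H1 _] z u hz hu; apply: (cs_of (comb := comb z u)).
- move=> t; exact: qf_exp.
- move=> t; apply: H1; exact: supp_comb.
- exact: H1.
Qed.

End SB.
Section SB2.
Variable R : realType.
Local Notation C := (R[i]).
Local Open Scope complex_scope.
Variables (n nt : nat) (I : nat -> nat) (A L U : 'M[C]_n) (S : nat -> 'M[C]_n).
Hypothesis HB : is_blocking n nt I.
Hypothesis HLU : block_LU nt I A L U S.
Local Notation inb k := (@inblk I k n).

Lemma conj_ge0 (a : C) : 0 <= a -> a^* = a.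
Proof. by move=> a0; rewrite (real_ge0E a0) conjc_real. Qed.

Lemma Inv_key k : (k < nt)%N -> Inv I A S k -> forall z, supp I k.+1 z ->
  exists u, (forall i, ~~ inb k i -> u i = 0) /\
   qf (S k.+1) z z = qf (S k) (comb z u (-1)) (comb z u (-1)) /\
   qf (S k.+1) z z <= qf (S k) z z.
Proof.
move=> hk Hk z hz.
have [_ /(_ k hk) [_ [_ [_ [_ [_ [Hs _]]]]]]] := HLU.
have [M HM] := stage_LS HLU hk.
have Imo := I_mono HB hk.
set y := fun l => \sum_j U l j * z j.
pose u := fun m => if inb k m then \sum_(l | inb k l) M m l * y l else 0.
have uP : forall i, ~~ inb k i -> u i = 0 by move=> i /negbTE hi; rewrite /u hi.
have su : supp I k u.
  by move=> i hi; apply: uP; rewrite /inblk leqNgt hi.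
have sz : supp I k z by move=> i hi; apply: hz; apply: leq_trans hi Imo.
exists u; split => //.
have Eb : forall i : 'I_n, (I k <= i)%N -> mv (S k) u i = \sum_(l | inb k l) L i l * y l.
  move=> i hi; rewrite /mv (sum_supp _ uP).
  under eq_bigr => m hm do rewrite /u hm.
  rewrite sum_assoc; apply: eq_bigr => l hl; by rewrite HM.
have Ec : forall i, inb k i -> \sum_(l | inb k l) L i l * y l = mv (S k) z i.
  move=> i hi; rewrite /y /mv.
  rewrite (@sum_assoc _ _ _ predT); apply: eq_bigr => j _.
  case: (leqP (I k.+1) j) => hj; first by rewrite (stage_SU HLU hk hi hj).
  by rewrite hz // !mulr0.
have Ed : forall i : 'I_n, (I k.+1 <= i)%N -> mv (S k.+1) z i = mv (S k) z i - \sum_(l | inb k l) L i l * y l.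
  move=> i hi; rewrite /y /mv (@sum_assoc _ _ _ predT) -sumrB; apply: eq_bigr => j _.
  case: (leqP (I k.+1) j) => hj; first by rewrite Hs // mulrBl.
  by rewrite hz // !mulr0 subr0.
have supQ : forall i : 'I_n, ~~ (I k.+1 <= i)%N -> z i = 0 by move=> i; rewrite -ltnNge; apply: hz.
set c := qf (S k) z u.
have ec : c = \sum_(i : 'I_n | (I k.+1 <= i)%N) (z i)^* * \sum_(l | inb k l) L i l * y l.
  rewrite /c qf_mv /dotp (sum_suppl _ supQ); apply: eq_bigr => i hi.
  by rewrite Eb // (leq_trans Imo hi).
have e1 : qf (S k.+1) z z = qf (S k) z z - c.
  rewrite ec !qf_mv /dotp !(sum_suppl _ supQ) -sumrB; apply: eq_bigr => i hi.
  by rewrite Ed // mulrBr.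
have euu : qf (S k) u u = qf (S k) u z.
  rewrite !qf_mv /dotp !(sum_suppl _ uP); apply: eq_bigr => i hi.
  by rewrite Eb ?Ec //; case/andP: hi.
have c0 : 0 <= c.
  have [H1 _] := Hk.
  have h := herm_k Hk sz su.
  have : c = (qf (S k) u u)^* by rewrite euu h conjcK.
  by move=> ->; rewrite conj_ge0 ?H1.
split.
  rewrite qf_exp e1 -/c euu (herm_k Hk sz su) -/c.
  rewrite rmorphN rmorph1 mulrNN mul1r; ring.
by rewrite e1 lerBlDr lerDl.
Qed.

Lemma Inv_step k : (k < nt)%N -> Inv I A S k -> Inv I A S k.+1.
Proof.
move=> hk Hk; have [H1 [H2 H3]] := Hk.
have Imo := I_mono HB hk.
have skz : forall z : 'I_n -> C, supp I k.+1 z -> supp I k z.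
  by move=> z hz i hi; apply: hz; apply: leq_trans hi Imo.
split; [|split] => z hz; have [u [uP [e1 e2]]] := Inv_key hk Hk hz.
- rewrite e1; apply: H1; apply: supp_comb => //; first exact: skz.
  by move=> i hi; apply: uP; rewrite /inblk leqNgt hi.
- by apply: le_trans e2 _; apply: H2; apply: skz.
have [|x [hx ex]] := H3 (comb z u (-1)).
  apply: supp_comb => //; first exact: skz.
  by move=> i hi; apply: uP; rewrite /inblk leqNgt hi.
exists x; split; last by rewrite ex e1.
move=> i hi; rewrite hx ?(leq_trans Imo hi) // /comb uP ?mulr0 ?addr0 //.
by rewrite /inblk negb_and -leqNgt hi orbT.
Qed.
End SB2.
Section SB3.
Variable R : realType.
Local Notation C := (R[i]).
Local Open Scope complex_scope.
Variables (n nt : nat) (I : nat -> nat) (A L U : 'M[C]_n) (S : nat -> 'M[C]_n).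
Hypothesis HB : is_blocking n nt I.
Hypothesis HLU : block_LU nt I A L U S.
Local Notation inb k := (@inblk I k n).

Lemma Nsq_supp (p : pred 'I_n) (v : 'I_n -> C) : (forall i, ~~ p i -> v i = 0) ->
  Nsq predT v = Nsq p v.
Proof.
move=> H; rewrite /Nsq (bigID p) /= [X in _ + X]big1 ?addr0 // => i /H ->.
by rewrite normr0 expr0n.
Qed.

Lemma div_step (a b c : C) : 0 <= a -> 0 <= b -> 0 <= c -> a ^+ 2 <= a * b * c -> a <= b * c.
Proof.
move=> a0 b0 c0 h.
have [->|an0] := eqVneq a 0; first by rewrite mulr_ge0.
have ap : 0 < a by rewrite lt_def an0 a0.
by move: h; rewrite expr2 -mulrA ler_pM2l.
Qed.

Lemma blk_b k : (k < nt)%N -> Inv I A S k -> (forall z, 0 <= qf A z z) -> A \in unitmx ->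
  forall x, Nsq (fun i : 'I_n => (I k.+1 <= i)%N) (Lcol I L k x) <=
      ((specnorm A * specnorm (invmx A)))%:C * Nsq (inb k) x.
Proof.
move=> hk Hk HA0 hA x.
have [H1 [H2 H3]] := Hk.
have [M HM] := stage_LS HLU hk.
have Imo := I_mono HB hk.
pose u := fun m => if inb k m then \sum_(l | inb k l) M m l * x l else 0.
have uP : forall i, ~~ inb k i -> u i = 0 by move=> i /negbTE hi; rewrite /u hi.
have su : supp I k u by move=> i hi; apply: uP; rewrite /inblk leqNgt hi.
have E : forall i : 'I_n, (I k <= i)%N -> mv (S k) u i = Lcol I L k x i.
  move=> i hi; rewrite /mv (sum_supp _ uP).
  under eq_bigr => m hm do rewrite /u hm.
  rewrite sum_assoc /Lcol; apply: eq_bigr => l hl; by rewrite HM.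
pose v := fun i : 'I_n => if (I k.+1 <= i)%N then Lcol I L k x i else 0.
have vP : forall i : 'I_n, ~~ (I k.+1 <= i)%N -> v i = 0 by move=> i /negbTE hi; rewrite /v hi.
have sv : supp I k v.
  move=> i hi; apply: vP; rewrite -ltnNge; exact: leq_trans hi Imo.
set V := Nsq _ (Lcol I L k x).
have eV : Nsq predT v = V.
  rewrite (Nsq_supp vP) /Nsq; apply: eq_bigr => i hi; by rewrite /v hi.
have eq1 : qf (S k) v u = V.
  rewrite qf_mv /dotp (sum_suppl _ vP) /V /Nsq; apply: eq_bigr => i hi.
  by rewrite /v hi E ?(leq_trans Imo hi) // sqr_normc mulrC.
have cs := cs_k Hk sv su; rewrite eq1 in cs.
set a := specnorm A; set s := specnorm (invmx A).
have hv : qf (S k) v v <= a%:C * V.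
  by rewrite -eV; apply: le_trans (H2 v sv) _; apply: Aform_ub.
pose w := fun i : 'I_n => if inb k i then Lcol I L k x i else 0.
have wP : forall i, ~~ inb k i -> w i = 0 by move=> i /negbTE hi; rewrite /w hi.
have equ : qf (S k) u u = dotp u w.
  rewrite qf_mv /dotp (sum_suppl _ uP) [RHS](sum_suppl _ uP); apply: eq_bigr => i hi.
  by rewrite /w hi E //; case/andP: hi.
have ew : Nsq predT w = Nsq (inb k) x.
  rewrite (Nsq_supp wP) -(unitary_pres HLU hk x) /Nsq; apply: eq_bigr => i hi; by rewrite /w hi.
have q0 := H1 u su.
have hun : Nsq predT u <= s%:C * qf (S k) u u.
  have [x0 [hx0 ex0]] := H3 u su.
  rewrite -ex0; apply: le_trans (Aform_lb HA0 hA x0).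
  have su' : forall i : 'I_n, ~~ (I k <= i)%N -> u i = 0 by move=> i; rewrite -ltnNge; apply: su.
  rewrite (Nsq_supp su') /Nsq [X in _ <= X](bigID (fun i : 'I_n => (I k <= i)%N)) /=.
  rewrite -[X in X <= _]addr0 lerD //; last by apply: sumr_ge0 => i _; rewrite exprn_ge0.
  by apply: eqle; apply: eq_bigr => i hi; rewrite hx0.
have hq : qf (S k) u u <= s%:C * Nsq predT w.
  apply: div_step => //; first by rewrite ler0c specnorm_ge0.
    exact: Nsq_ge0.
  rewrite -sq_norm_ge0 // equ; apply: le_trans (dotp_cs _ _) _.
  rewrite -equ !dotp_Nsq ler_wpM2r ?Nsq_ge0 //.
  by rewrite mulrC.
have V0 : 0 <= V by apply: Nsq_ge0.
rewrite rmorphM -ew; apply: div_step => //.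
- by rewrite mulr_ge0 // ler0c specnorm_ge0.
- exact: Nsq_ge0.
rewrite -sq_norm_ge0 //; apply: le_trans cs _.
apply: le_trans (ler_pM (H1 v sv) q0 hv hq) _.
by apply: eqle; ring.
Qed.
End SB3.
Section FinB.
Variable R : realType.
Local Notation C := (R[i]).
Local Open Scope complex_scope.
Variables (n nt : nat) (I : nat -> nat) (A L U : 'M[C]_n) (S : nat -> 'M[C]_n).
Hypothesis HB : is_blocking n nt I.
Hypothesis HLU : block_LU nt I A L U S.
Local Notation inb k := (@inblk I k n).

Lemma qf_ctr (M : 'M[C]_n) (x : 'cV[C]_n) : (ctrmx x *m M *m x) 0 0 = qf M (fun i => x i 0) (fun i => x i 0).
Proof.
rewrite mxE /qf; under eq_bigr do rewrite mxE big_distrl /=.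
rewrite exchange_big /=; apply: eq_bigr => i _; apply: eq_bigr => j _.
by rewrite !mxE.
Qed.

Lemma spd_psd : spd A -> forall z, 0 <= qf A z z.
Proof.
move=> [_ H] z; pose x : 'cV[C]_n := \col_i z i.
have ez : (fun i => x i 0) = z by apply: funext => i; rewrite mxE.
have [x0|xn0] := eqVneq x 0.
  rewrite /qf big1 // => i _; rewrite big1 // => j _.
  have : x j 0 = 0 by rewrite x0 mxE.
  by rewrite mxE => ->; rewrite mulr0.
by have := H x xn0; rewrite qf_ctr ez => /ltW.
Qed.

Lemma spd_unit : spd A -> A \in unitmx.
Proof.
move=> [HT H]; rewrite unitmxE unitfE; apply/negP => /det0P [v vn0 vA].
have Ax : A *m v^T = 0 by rewrite -{1}HT -trmx_mul vA trmx0.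
have := H v^T; rewrite trmx_eq0 => /(_ vn0).
by rewrite -mulmxA Ax mulmx0 mxE ltxx.
Qed.
End FinB.
Section FinB2.
Variable R : realType.
Local Notation C := (R[i]).
Local Open Scope complex_scope.
Variables (n nt : nat) (I : nat -> nat) (A L U : 'M[C]_n) (S : nat -> 'M[C]_n).
Hypothesis HB : is_blocking n nt I.
Hypothesis HLU : block_LU nt I A L U S.

Lemma Inv_all : (forall z, 0 <= qf A z z) -> forall k, (k <= nt)%N -> Inv I A S k.
Proof.
move=> Hp; elim=> [|k IH] hk; first exact: Inv0 HLU Hp.
apply: (Inv_step HB HLU hk); apply: IH; exact: ltnW.
Qed.

Lemma partB : spd A -> specnorm L <= (Num.sqrt (kappa2 A) + 1) * nt%:R.
Proof.
move=> Hs; have Hp := spd_psd Hs; have hA := spd_unit Hs.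
have k0 : 0 <= kappa2 A by rewrite /kappa2 mulr_ge0 ?specnorm_ge0.
rewrite addrC; apply: (assemble HB HLU (c := Num.sqrt (kappa2 A))); first exact: sqrtr_ge0.
move=> k hk x; rewrite sqr_sqrtr //.
exact: (blk_b HB HLU hk (Inv_all Hp (ltnW hk)) Hp hA x).
Qed.
End FinB2.

Unset Implicit Arguments.
Set Strict Implicit.

Theorem theorem2p8 (R : realType) (n nt : nat) (I : nat -> nat)
    (A L U : 'M[R[i]]_n) (S : nat -> 'M[R[i]]_n) :
  is_blocking n nt I ->
  block_LU nt I A L U S ->
  (A \in unitmx -> col_diag_dominant A ->
     specnorm L <= ((max_blksize nt I)%:R * Num.sqrt (max_blksize nt I)%:R + 1)
                   * nt%:R) /\
  (spd A ->
     specnorm L <= (Num.sqrt (kappa2 A) + 1) * nt%:R).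
Proof.
move=> HB HLU; split.
  by move=> _ H; exact: partA HB HLU H.
exact: partB HB HLU.
Qed.
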